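(* Let $\lambda,\nu$ be partitions with $\nu$ obtained from $\lambda$ by adding one cell. Then \[ \lim_{q\to1}\alpha_{\nu/\lambda}(q,q)=\lim_{q\to1}\overline{\alpha}_{\nu/\lambda}(q,q)=\frac{H_\lambda}{H_\nu}, \] where $H_\kappa=\prod_{c\in\kappa}h_\kappa(c)$ is the product of hook-lengths.
   Context: Partitions are Young diagrams in French convention (cells $(x,y)\in\mathbb{Z}_{>0}^2$, $x\le\lambda_y$), $\lambda'$ the conjugate; for $c=(x,y)\in\lambda$, $a_\lambda(c)=\lambda_y-x$, $\ell_\lambda(c)=\lambda'_x-y$, $h_\lambda(c)=a_\lambda(c)+\ell_\lambda(c)+1$. For $\lambda\subseteq\nu$, $\mathcal{R}_{\nu/\lambda}$ (resp. $\mathcal{C}_{\nu/\lambda}$) is the set of cells of $\lambda$ in a row (resp. column) containing a cell of $\nu/\lambda$. With $[i,j]=1-q^it^j$: $\alpha_{\nu/\lambda}(q,t)=\prod_{c\in\mathcal{R}_{\nu/\lambda}}\frac{[a_\lambda(c),\ell_\lambda(c)+1]}{[a_\nu(c),\ell_\nu(c)+1]}\prod_{c\in\mathcal{C}_{\nu/\lambda}}\frac{[a_\lambda(c)+1,\ell_\lambda(c)]}{[a_\nu(c)+1,\ell_\nu(c)]}$, $\overline{\alpha}_{\nu/\lambda}(q,t)=\prod_{c\in\mathcal{R}_{\nu/\lambda}}\frac{[a_\lambda(c)+1,\ell_\lambda(c)]}{[a_\nu(c)+1,\ell_\nu(c)]}\prod_{c\in\mathcal{C}_{\nu/\lambda}}\frac{[a_\lambda(c),\ell_\lambda(c)+1]}{[a_\nu(c),\ell_\nu(c)+1]}$.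 *)

(* Defs.v *)
From HB Require Import structures.
From mathcomp Require Import all_boot all_order all_algebra.
Set Implicit Arguments. Unset Strict Implicit. Unset Printing Implicit Defensive.
Import Order.TTheory GRing.Theory Num.Theory.

(* Partitions as weakly decreasing sequences of positive parts:
   lambda = [:: lambda_1; lambda_2; ...].  Cells (x,y) in French
   convention, x = column >= 1, y = row >= 1, with x <= lambda_y. *)

Definition is_partition (l : seq nat) : bool :=
  sorted geq l && all (fun r => 0 < r)%N l.

(* lambda_y (1-indexed), 0 beyond the last row *)
Definition prow (l : seq nat) (y : nat) : nat := nth 0%N l y.-1.

Definition pcol (l : seq nat) (x : nat) : nat := count (fun r => x <= r)%N l.

Definition cells (l : seq nat) : seq (nat * nat) :=
  [seq (x, y) | y <- iota 1 (size l), x <- iota 1 (prow l y)].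

Definition arm (l : seq nat) (c : nat * nat) : nat := (prow l c.2 - c.1)%N.
Definition leg (l : seq nat) (c : nat * nat) : nat := (pcol l c.1 - c.2)%N.
Definition hook (l : seq nat) (c : nat * nat) : nat := (arm l c + leg l c + 1)%N.

Definition hook_prod (l : seq nat) : nat := (\prod_(c <- cells l) hook l c)%N.

Definition skew (n l : seq nat) : seq (nat * nat) :=
  [seq d <- cells n | d \notin cells l].

Definition inR (n l : seq nat) (c : nat * nat) : bool :=
  has (fun d => d.2 == c.2) (skew n l).
Definition inC (n l : seq nat) (c : nat * nat) : bool :=
  has (fun d => d.1 == c.1) (skew n l).

Local Open Scope ring_scope.

Definition brk (R : ringType) (q t : R) (i j : nat) : R := 1 - q ^+ i * t ^+ j.

Definition alpha (R : fieldType) (n l : seq nat) (q t : R) : R :=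
  (\prod_(c <- cells l | inR n l c)
      (brk q t (arm l c) (leg l c).+1 / brk q t (arm n c) (leg n c).+1)) *
  (\prod_(c <- cells l | inC n l c)
      (brk q t (arm l c).+1 (leg l c) / brk q t (arm n c).+1 (leg n c))).

Definition alphabar (R : fieldType) (n l : seq nat) (q t : R) : R :=
  (\prod_(c <- cells l | inR n l c)
      (brk q t (arm l c).+1 (leg l c) / brk q t (arm n c).+1 (leg n c))) *
  (\prod_(c <- cells l | inC n l c)
      (brk q t (arm l c) (leg l c).+1 / brk q t (arm n c) (leg n c).+1)).

(* Main.v *)
Require Import Defs.
From HB Require Import structures.
From mathcomp Require Import all_boot all_order all_algebra.
From mathcomp Require Import all_classical all_reals all_analysis.
From mathcomp Require Import zify ring.
Import Order.TTheory GRing.Theory Num.Theory.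
Import numFieldNormedType.Exports.
Set Implicit Arguments. Unset Strict Implicit. Unset Printing Implicit Defensive.
Lemma cellsP s x y : ((x, y) \in cells s) = [&& 0 < y, 0 < x & x <= prow s y]%N.
Proof.
apply/allpairsPdep/and3P => [[y' [x' [Hy Hx [-> ->]]]]|[y0 x0 xle]].
  by move: Hy Hx; rewrite !mem_iota => /andP[? ?] /andP[? ?]; split => //; lia.
exists y, x; split => //; rewrite mem_iota; last by lia.
have : (0 < prow s y)%N by lia.
rewrite /prow; case: (ltnP y.-1 (size s)) => [|H]; last by rewrite nth_default.
lia.
Qed.

Lemma nth_sorted s i j : is_partition s -> (i <= j)%N -> (nth 0 s j <= nth 0 s i)%N.
Proof.
case/andP=> so _ ij.
case: (ltnP j (size s)) => js; last by rewrite nth_default.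
have Hi : (i < size s)%N by lia.
have tr : transitive geq by move=> a b c /= H1 H2; apply: leq_trans H2 H1.
by apply: (@sorted_leq_nth _ geq tr (fun a => leqnn a) 0 s so i j); rewrite ?inE.
Qed.

Lemma nth_pos s i : is_partition s -> (0 < nth 0 s i)%N = (i < size s)%N.
Proof.
case/andP=> _ /allP al.
case: (ltnP i (size s)) => H; last by rewrite nth_default.
by apply: al; exact: mem_nth.
Qed.

Lemma sumn_nth s M : (size s <= M)%N -> sumn s = (\sum_(i < M) nth 0 s i)%N.
Proof.
move=> HM; rewrite sumnE (big_nth 0) -(big_mkord xpredT) (big_cat_nat (leq0n _) HM) /=.
rewrite [X in _ = (_ + X)%N]big1_seq ?addn0 // => i /andP[_].
by rewrite mem_index_iota => /andP[? _]; rewrite nth_default.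
Qed.

Lemma pcolE s M x : (0 < x)%N -> (size s <= M)%N ->
  pcol s x = (\sum_(i < M) (x <= nth 0 s i))%N.
Proof.
move=> x0 HM; rewrite -(big_mkord xpredT (fun i => nat_of_bool (x <= nth 0 s i))).
rewrite /pcol -sum1_count big_mkcond (big_nth 0).
rewrite (big_cat_nat (leq0n _) HM) /=.
rewrite [X in _ = (_ + X)%N]big1_seq ?addn0 //; last first.
  move=> i /andP[_]; rewrite mem_index_iota => /andP[? _]; rewrite nth_default //.
  by case: x x0.
Qed.

Lemma prod_cells s M (F : nat * nat -> nat) : (size s <= M)%N ->
  (\prod_(c <- cells s) F c = \prod_(y <- iota 1 M) \prod_(x <- iota 1 (prow s y)) F (x, y))%N.
Proof.
move=> HM; rewrite /cells big_allpairs_dep -(subnKC HM) iotaD big_cat /=.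
rewrite [X in _ = (_ * X)%N]big1_seq ?muln1 // => y /andP[_].
rewrite mem_iota => /andP[H1 _]; rewrite /prow nth_default ?big_nil //; lia.
Qed.

Section Comb.
Variables (l n : seq nat).
Hypotheses (Hl : is_partition l) (Hn : is_partition n)
  (Hsub : {subset cells l <= cells n}) (Hsum : sumn n = (sumn l).+1).

Lemma le_nth y : (nth 0 l y <= nth 0 n y)%N.
Proof.
case E: (nth 0 l y) => [//|k].
have : (k.+1, y.+1) \in cells l by rewrite cellsP /prow /= E.
by move/Hsub; rewrite cellsP /prow /=.
Qed.

Lemma size_le : (size l <= size n)%N.
Proof.
case E: (size l) => [//|k].
have : (0 < nth 0 l k)%N by rewrite nth_pos // E.
move/leq_trans/(_ (le_nth k)); rewrite nth_pos //.
Qed.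

Lemma exists_b0 : exists b0, (b0 < size n)%N /\ forall y, nth 0 n y = (nth 0 l y + (y == b0))%N.
Proof.
pose N := size n.
have E1 := sumn_nth (leqnn N); have E2 := sumn_nth size_le.
have : (\sum_(i < N) (nth 0 n i - nth 0 l i) == 1)%N.
  have : (\sum_(i < N) nth 0 n i = \sum_(i < N) nth 0 l i + \sum_(i < N) (nth 0 n i - nth 0 l i))%N.
    by rewrite -big_split /=; apply: eq_bigr => i _; rewrite subnKC // le_nth.
  rewrite -E1 -E2 Hsum => /eqP; rewrite -addn1 eqn_add2l eq_sym //.
case/sum_nat_eq1 => b [_ Hb Hj]; exists b; split => // y.
case: (ltnP y N) => yN; last first.
  rewrite !nth_default //; last exact: leq_trans size_le yN.
  have bN := ltn_ord b; case: eqP => [Eb|//]; move: yN bN; rewrite Eb /N; lia.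
have := Hj (Ordinal yN); have := le_nth y.
case: eqP => [Ey|neq].
  by move=> H1 _; move: Hb; rewrite -Ey /= eqxx; lia.
have -> : (y == b) = false by apply/eqP => E; apply: neq; apply: val_inj.
move=> H1 H2; have /= := H2 isT isT; lia.
Qed.

Variable b0 : nat.
Hypotheses (Hb0 : (b0 < size n)%N) (Hnb : forall y, nth 0 n y = (nth 0 l y + (y == b0))%N).
Let a := (nth 0 l b0).+1.
Let b := b0.+1.

Lemma prowE y : (0 < y)%N -> prow n y = (prow l y + (y == b))%N.
Proof. by case: y => // y _; rewrite /prow /= Hnb. Qed.

Lemma pcol_n x : (0 < x)%N -> pcol n x = (pcol l x + (x == a))%N.
Proof.
move=> x0; rewrite (pcolE x0 (leqnn _)) (pcolE x0 size_le).
under eq_bigr => i _ do rewrite Hnb.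
have -> : (\sum_(i < size n) (x <= nth 0 l i + (nat_of_ord i == b0)))%N =
  (\sum_(i < size n) ((x <= nth 0 l i) + ((nat_of_ord i == b0) && (x == a))))%N.
  by apply: eq_bigr => i _; rewrite /a; case: (eqVneq (nat_of_ord i) b0) => [->|ne]; lia.
rewrite big_split /=; congr (_ + _)%N.
rewrite (bigD1 (Ordinal Hb0)) //= eqxx /= big1 ?addn0 // => j nj.
have -> : (val j == b0) = false.
  by apply/eqP => E; move/eqP: nj; apply; apply: val_inj.
by [].
Qed.

Lemma pcol_ge x y : (x, y) \in cells l -> (y <= pcol l x)%N.
Proof.
rewrite cellsP /prow => /and3P[y0 x0 xle].
have Hy : (y <= size l)%N.
  have : (0 < nth 0 l y.-1)%N by lia.
  rewrite nth_pos //; lia.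
rewrite (pcolE x0 (leqnn _)) -(big_mkord xpredT (fun i => nat_of_bool (x <= nth 0 l i))) (big_cat_nat (leq0n y) Hy) /=.
apply: leq_trans (leq_addr _ _).
apply: (@leq_trans (\sum_(0 <= i < y) 1)%N); first by rewrite sum_nat_const_nat muln1 subn0.
rewrite big_seq_cond [X in (_ <= X)%N]big_seq_cond; apply: leq_sum => i.
rewrite andbT mem_index_iota => /andP[_ iy].
have := nth_sorted (i := i) (j := y.-1) Hl; lia.
Qed.

Lemma pcol_a : pcol n a = b.
Proof.
rewrite (pcolE (ltn0Sn _) (leqnn _)) -(big_mkord xpredT (fun i => nat_of_bool (a <= nth 0 n i))) (big_cat_nat (leq0n b) Hb0) /=.
rewrite [X in (_ + X)%N]big1_seq ?addn0; last first.
  move=> i /andP[_]; rewrite mem_index_iota => /andP[bi _].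
  rewrite Hnb /a; have := nth_sorted (i := b0) (j := i) Hl; lia.
apply: (@etrans _ _ (\sum_(0 <= i < b) 1)%N); last by rewrite sum_nat_const_nat muln1 subn0.
apply: eq_big_seq => i; rewrite mem_index_iota => /andP[_ ib].
have := nth_sorted (i := i) (j := b0) Hn; rewrite (Hnb b0) /a; lia.
Qed.

Lemma prow_b : prow n b = a.
Proof. by rewrite prowE // eqxx /prow /= addn1. Qed.

Lemma skewP (d : nat * nat) : (d \in Defs.skew n l) = (d == (a, b)).
Proof.
case: d => x [|y]; first by rewrite mem_filter !cellsP /= xpair_eqE andbF.
rewrite mem_filter !cellsP prowE // /prow /= xpair_eqE /b eqSS /a.
case: (eqVneq y b0) => [->|ne]; rewrite ?eqxx ?andbT ?addn1 ?addn0 /=;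
  apply/idP/idP; lia.
Qed.

Lemma inR_E (c : nat * nat) : inR n l c = (c.2 == b).
Proof.
apply/hasP/eqP => [[d]|E]; first by rewrite skewP => /eqP -> /= /eqP ->.
by exists (a, b); rewrite ?skewP //= E.
Qed.

Lemma inC_E (c : nat * nat) : inC n l c = (c.1 == a).
Proof.
apply/hasP/eqP => [[d]|E]; first by rewrite skewP => /eqP -> /= /eqP ->.
by exists (a, b); rewrite ?skewP //= E.
Qed.

Lemma arm_n (c : nat * nat) : c \in cells l -> arm n c = (arm l c + (c.2 == b))%N.
Proof.
case: c => x y; rewrite cellsP /arm /= => /and3P[y0 x0 xle].
rewrite prowE //; lia.
Qed.

Lemma leg_n (c : nat * nat) : c \in cells l -> leg n c = (leg l c + (c.1 == a))%N.
Proof.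
case: c => x y cl; have H := pcol_ge cl; move: cl; rewrite cellsP /leg /= => /and3P[y0 x0 xle].
rewrite pcol_n //; lia.
Qed.

Lemma not_both (c : nat * nat) : c \in cells l -> ~~ ((c.2 == b) && (c.1 == a)).
Proof.
case: c => x y; rewrite cellsP /= => /and3P[y0 x0].
case: (eqVneq y b) => [->|//] /=; rewrite /prow /b /= /a; lia.
Qed.

Lemma hook_n (c : nat * nat) : c \in cells l -> hook n c = (hook l c + (c.2 == b) + (c.1 == a))%N.
Proof. by move=> cl; rewrite /hook arm_n // leg_n //; lia. Qed.

Lemma hook_prod_n : hook_prod n = (\prod_(c <- cells l) hook n c)%N.
Proof.
rewrite /hook_prod (prod_cells _ (leqnn _)) (prod_cells _ size_le).
apply: eq_big_seq => y; rewrite mem_iota => /andP[y0 _].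
rewrite prowE //; case: (eqVneq y b) => [->|]; last by rewrite addn0.
rewrite iotaD big_cat /= big_cons big_nil.
have -> : (1 + prow l b)%N = a by rewrite /prow /a /= add1n.
suff -> : hook n (a, b) = 1%N by rewrite !muln1.
by rewrite /hook /arm /leg /= prow_b pcol_a !subnn.
Qed.

Local Open Scope ring_scope.

Lemma alphaE (R : fieldType) (q : R) : alpha n l q q = \prod_(c <- cells l)
  (if (c.2 == b) || (c.1 == a) then (1 - q ^+ hook l c) / (1 - q ^+ hook n c) else 1).
Proof.
rewrite /alpha big_mkcond [X in _ * X]big_mkcond -big_split /=; apply: eq_big_seq => c cl.
rewrite inR_E inC_E; have nb := not_both cl; have am := arm_n cl; have lg := leg_n cl.
rewrite /brk -!exprD /hook.
case E2: (c.2 == b); case E1: (c.1 == a); rewrite E1 E2 /= in nb am lg * => //;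
  rewrite ?mulr1 ?mul1r //; congr ((1 - q ^+ _) / (1 - q ^+ _)); lia.
Qed.

Lemma alphabarE (R : fieldType) (q : R) : alphabar n l q q = \prod_(c <- cells l)
  (if (c.2 == b) || (c.1 == a) then (1 - q ^+ hook l c) / (1 - q ^+ hook n c) else 1).
Proof.
rewrite /alphabar big_mkcond [X in _ * X]big_mkcond -big_split /=; apply: eq_big_seq => c cl.
rewrite inR_E inC_E; have nb := not_both cl; have am := arm_n cl; have lg := leg_n cl.
rewrite /brk -!exprD /hook.
case E2: (c.2 == b); case E1: (c.1 == a); rewrite E1 E2 /= in nb am lg * => //;
  rewrite ?mulr1 ?mul1r //; congr ((1 - q ^+ _) / (1 - q ^+ _)); lia.
Qed.

Lemma ratioE (R : fieldType) : ((hook_prod l)%:R / (hook_prod n)%:R : R) =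
  \prod_(c <- cells l) ((hook l c)%:R / (hook n c)%:R).
Proof. by rewrite hook_prod_n prodf_div /hook_prod !natr_prod. Qed.
End Comb.

Local Open Scope ring_scope.
Local Open Scope classical_set_scope.
Section An.
Variable R : realType.

Lemma geomS (q : R) m : (1 - q) * (\sum_(i < m) q ^+ i) = 1 - q ^+ m.
Proof.
elim: m => [|m IH]; first by rewrite big_ord0 mulr0 expr0 subrr.
by rewrite big_ord_recr /= mulrDr IH exprSr; ring.
Qed.

Lemma geom_lim m : (fun q : R => \sum_(i < m) q ^+ i) @ (1 : R)^' --> (m%:R : R).
Proof.
have -> : (fun q : R => \sum_(i < m) q ^+ i) = horner (\sum_(i < m) 'X^i : {poly R}).
  by apply: funext => q; rewrite horner_sum; apply: eq_bigr => i _; rewrite hornerXn.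
have -> : (m%:R : R) = (\sum_(i < m) 'X^i : {poly R}).[1].
  by rewrite horner_sum; under eq_bigr do rewrite hornerXn expr1n; rewrite sumr_const card_ord.
apply: cvg_within_filter; exact: continuous_horner.
Qed.

Lemma ratio_lim m k : (0 < k)%N ->
  (fun q : R => (1 - q ^+ m) / (1 - q ^+ k)) @ (1 : R)^' --> (m%:R / k%:R : R).
Proof.
move=> k0.
have E : {near (1:R)^', (fun q : R => (\sum_(i < m) q ^+ i) * (\sum_(i < k) q ^+ i)^-1) =1
   (fun q : R => (1 - q ^+ m) / (1 - q ^+ k))}.
  near=> q.
  have q1 : 1 - q != 0.
    rewrite subr_eq0 eq_sym; near: q; exact: nbhs_dnbhs_neq.
  by rewrite -!geomS -mulf_div divff // mul1r.
apply: cvg_trans (near_eq_cvg E) _.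
apply: cvgM; first exact: geom_lim.
apply: cvgV; first by rewrite pnatr_eq0 -lt0n.
exact: geom_lim.
Unshelve. all: by end_near.
Qed.

Lemma prod_lim (I : Type) (s : seq I) (P : pred I) (f : I -> R -> R) (L : I -> R) :
  (forall i, P i -> f i @ (1:R)^' --> L i) ->
  (fun q => \prod_(i <- s | P i) f i q) @ (1:R)^' --> \prod_(i <- s | P i) L i.
Proof.
move=> H; elim: s => [|i s IH].
  rewrite big_nil; under eq_cvg do rewrite big_nil; exact: cvg_cst.
rewrite big_cons; under eq_cvg do rewrite big_cons.
case: (P i) (H i) => [Hi|_]; last exact: IH.
exact: cvgM (Hi isT) IH.
Qed.
End An.

Local Open Scope classical_set_scope.
Local Open Scope ring_scope.

Lemma prod_lim_seq (R : realType) (I : eqType) (s : seq I) (f : I -> R -> R) (L : I -> R) :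
  (forall i, i \in s -> f i @ (1:R)^' --> L i) ->
  (fun q => \prod_(i <- s) f i q) @ (1:R)^' --> \prod_(i <- s) L i.
Proof.
move=> H; rewrite big_seq; under eq_cvg do rewrite big_seq.
exact: prod_lim.
Qed.

Theorem lemma4p8 (R : realType) (l n : seq nat) :
  is_partition l -> is_partition n ->
  {subset cells l <= cells n} -> sumn n = (sumn l).+1 ->
  (alpha n l q q @[q --> (1 : R)^'] --> ((hook_prod l)%:R / (hook_prod n)%:R : R)) /\
  (alphabar n l q q @[q --> (1 : R)^'] --> ((hook_prod l)%:R / (hook_prod n)%:R : R)).
Proof.
move=> Hl Hn Hsub Hsum.
have [b0 [Hb0 Hnb]] := exists_b0 Hl Hn Hsub Hsum.
have key : (fun q : R => \prod_(c <- cells l)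
  (if (c.2 == b0.+1) || (c.1 == (nth 0 l b0).+1)
   then (1 - q ^+ hook l c) / (1 - q ^+ hook n c) else 1)) @ (1:R)^'
  --> ((hook_prod l)%:R / (hook_prod n)%:R : R).
  rewrite (ratioE Hl Hn Hsub Hsum Hb0 Hnb); apply: prod_lim_seq => c cl.
  have hn := hook_n Hl Hn Hsub Hsum Hb0 Hnb cl.
  case: (boolP (_ || _)) => H.
    apply: ratio_lim; rewrite hn /hook; lia.
  move: H hn; rewrite negb_or => /andP[/negbTE -> /negbTE ->] /= hn.
  rewrite hn !addn0 divff; first exact: cvg_cst.
  by rewrite pnatr_eq0 /hook addn1.
split.
  by under eq_cvg do rewrite (alphaE Hl Hn Hsub Hsum Hb0 Hnb).
by under eq_cvg do rewrite (alphabarE Hl Hn Hsub Hsum Hb0 Hnb).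
Qed.
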